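(* The energy matrix $\sigma$ is symmetric and positive-definite.
   Context: Fix integers $d,p\ge 1$. Let $(Z_n)=(A_n,M_n)$ be a Markov-additive process on $\mathbb{Z}^d\times\{1,\dots,p\}$ (a Markov chain with $\mathbb{P}_{(x,i)}((A_1,M_1)=(x',i'))=\mathbb{P}_{(0,i)}((A_1,M_1)=(x'-x,i'))$), with jump matrix $\mu_{i,j}(x)=\mathbb{P}_{(0,i)}((A_1,M_1)=(x,j))$, assumed irreducible, aperiodic (for every state $(x,i)$, $\gcd\{n\ge1:\mathbb{P}_{(x,i)}(Z_n=(x,i))>0\}=1$), with finite exponential moments ($\sum_xe^{\alpha\|x\|}\mu_{i,j}(x)<\infty$ for all $\alpha>0$). Let $\pi$ be the stationary distribution of the transition matrix $\big(\sum_x\mu_{i,j}(x)\big)_{i,j}$ of $(M_n)$; local drifts $m_{i,j}=\sum_x x\mu_{i,j}(x)$, global drift $m=\sum_{i,j}\pi_im_{i,j}$. A change of section is a real $p\times d$ matrix $g$ with rows $g_i$; the $g$-changed process has jump measures ${}^g\mu_{i,j}(x)=\mu_{i,j}(x+g_j-g_i)$ ($x\in\mathbb{R}^d$) and local drifts ${}^gm_{i,j}=\sum_xx\,{}^g\mu_{i,j}(x)$. A change of section is appropriate if $\sum_j{}^gm_{i,j}=m$ for all $i$; such $g$ exist and the resulting measures ${}^g\mu_{i,j}$ do not depend on the appropriate $g$. The energy matrix is the $d\times d$ matrix $\sigma_{k,l}=\sum_{x\in\mathbb{R}^d}x_kx_l\sum_{i,j=1}^p\pi_i\,{}^g\mu_{i,j}(x)$,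 $g$ appropriate. *)

(* Defs.v *)
From HB Require Import structures.
From mathcomp Require Import all_boot all_order all_algebra.
From mathcomp Require Import all_classical all_reals all_analysis.
Set Implicit Arguments. Unset Strict Implicit. Unset Printing Implicit Defensive.
Import Order.TTheory GRing.Theory Num.Theory.
Local Open Scope classical_set_scope.
Local Open Scope ring_scope.

(* Sum over a (countable or not) type of a real-valued function, as the
   difference of the (extended-real) sums of its positive and negative
   parts; this is the usual sum whenever the family is absolutely summable. *)
Definition rsum (R : realType) (T : choiceType) (f : T -> R) : R :=
  fine (\esum_(x in [set: T]) (Num.max (f x) 0)%:E)
  - fine (\esum_(x in [set: T]) (Num.max (- f x) 0)%:E).

(* Z^d is 'rV[int]_d; the modulating states {1..p} are 'I_p.
   A jump matrix mu i j x = P_(0,i)((A_1,M_1) = (x,j)). *)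
Definition jump_matrix (R : realType) (d p : nat)
    (mu : 'I_p -> 'I_p -> 'rV[int]_d -> R) : Prop :=
  (forall i j x, 0 <= mu i j x) /\
  (forall i, \esum_(jx in [set: 'I_p * 'rV[int]_d]) (mu i jx.1 jx.2)%:E = 1%E).

Definition mstep (R : realType) (d p : nat)
    (mu : 'I_p -> 'I_p -> 'rV[int]_d -> R)
    (s t : 'rV[int]_d * 'I_p) : R :=
  mu s.2 t.2 (t.1 - s.1).

Fixpoint nstep (R : realType) (d p : nat)
    (mu : 'I_p -> 'I_p -> 'rV[int]_d -> R) (n : nat)
    (s t : 'rV[int]_d * 'I_p) : \bar R :=
  match n with
  | 0 => ((s == t)%:R)%:E
  | n'.+1 => \esum_(u in [set: 'rV[int]_d * 'I_p])
               (nstep mu n' s u * (mstep mu u t)%:E)%E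
  end.

Definition irreducible (R : realType) (d p : nat)
    (mu : 'I_p -> 'I_p -> 'rV[int]_d -> R) : Prop :=
  forall s t, exists n, (0 < nstep mu n s t)%E.

(* gcd {n >= 1 : P_s(Z_n = s) > 0} = 1 for every state s *)
Definition aperiodic (R : realType) (d p : nat)
    (mu : 'I_p -> 'I_p -> 'rV[int]_d -> R) : Prop :=
  forall s, forall k : nat,
    (forall n : nat, (0 < n)%N -> (0 < nstep mu n s s)%E -> (k %| n)%N) ->
    k = 1%N.

Definition znorm (R : realType) (d : nat) (x : 'rV[int]_d) : R :=
  \sum_(k < d) `|(x 0 k)%:~R : R|.

Definition exp_moments (R : realType) (d p : nat)
    (mu : 'I_p -> 'I_p -> 'rV[int]_d -> R) : Prop :=
  forall alpha : R, 0 < alpha -> forall i j,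
    (\esum_(x in [set: 'rV[int]_d]) (expR (alpha * znorm R x) * mu i j x)%:E
       < +oo)%E.

Definition mod_trans (R : realType) (d p : nat)
    (mu : 'I_p -> 'I_p -> 'rV[int]_d -> R) (i j : 'I_p) : R :=
  rsum (mu i j).

Definition stationary (R : realType) (d p : nat)
    (mu : 'I_p -> 'I_p -> 'rV[int]_d -> R) (pi : 'I_p -> R) : Prop :=
  [/\ forall i, 0 <= pi i, \sum_i pi i = 1 &
      forall j, pi j = \sum_i pi i * mod_trans mu i j].

Definition local_drift (R : realType) (d p : nat)
    (mu : 'I_p -> 'I_p -> 'rV[int]_d -> R) (i j : 'I_p) : 'rV[R]_d :=
  \row_k rsum (fun x : 'rV[int]_d => (x 0 k)%:~R * mu i j x).

Definition global_drift (R : realType) (d p : nat)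
    (mu : 'I_p -> 'I_p -> 'rV[int]_d -> R) (pi : 'I_p -> R) : 'rV[R]_d :=
  \sum_i \sum_j pi i *: local_drift mu i j.

(* mu_{i,j} seen as a measure on R^d (zero off Z^d) *)
Definition muR (R : realType) (d p : nat)
    (mu : 'I_p -> 'I_p -> 'rV[int]_d -> R) (i j : 'I_p) (x : 'rV[R]_d) : R :=
  if [forall k, x 0 k \is a Num.int] then mu i j (map_mx (@Num.floor R) x)
  else 0.

Definition gmu (R : realType) (d p : nat)
    (mu : 'I_p -> 'I_p -> 'rV[int]_d -> R) (g : 'M[R]_(p, d))
    (i j : 'I_p) (x : 'rV[R]_d) : R :=
  muR mu i j (x + row j g - row i g).

Definition g_drift (R : realType) (d p : nat)
    (mu : 'I_p -> 'I_p -> 'rV[int]_d -> R) (g : 'M[R]_(p, d))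
    (i j : 'I_p) : 'rV[R]_d :=
  \row_k rsum (fun x : 'rV[R]_d => x 0 k * gmu mu g i j x).

Definition appropriate (R : realType) (d p : nat)
    (mu : 'I_p -> 'I_p -> 'rV[int]_d -> R) (pi : 'I_p -> R)
    (g : 'M[R]_(p, d)) : Prop :=
  forall i, \sum_j g_drift mu g i j = global_drift mu pi.

Definition energy (R : realType) (d p : nat)
    (mu : 'I_p -> 'I_p -> 'rV[int]_d -> R) (pi : 'I_p -> R)
    (g : 'M[R]_(p, d)) : 'M[R]_d :=
  \matrix_(k, l) rsum (fun x : 'rV[R]_d =>
     x 0 k * x 0 l * \sum_i \sum_j pi i * gmu mu g i j x).

(* Main.v *)
Require Import Defs.
From HB Require Import structures.
From mathcomp Require Import all_boot all_order all_algebra.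
From mathcomp Require Import all_classical all_reals all_analysis.
From mathcomp Require Import lra ring.
Import Order.TTheory GRing.Theory Num.Theory.
Set Implicit Arguments. Unset Strict Implicit.
Local Open Scope ring_scope.

Section RS.
Variables (R : realType) (T : choiceType).

Definition summ (f : T -> R) :=
  (\esum_(x in [set: T]) (`|f x|)%:E < +oo)%E.

Lemma esumZ_ge0 (r : R) (h : T -> \bar R) : 0 <= r -> (forall x, (0 <= h x)%E) ->
  esum [set: T] (fun x => (r%:E * h x)%E) = (r%:E * esum [set: T] h)%E.
Proof.
move=> r0 h0; rewrite /esum -ereal_supZl//; last first.
  by apply/set0P; exists 0%E; exists set0; [exact: fsets_set0|rewrite fsbig_set0].
congr ereal_sup; apply/seteqP; split => y /=.
  by move=> [A fA <-]; exists (\sum_(x \in A) h x)%E; [exists A|rewrite ge0_mule_fsumr].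
by move=> [z [A fA <-] <-]; exists A => //; rewrite ge0_mule_fsumr.
Qed.

Lemma summ_le (f g : T -> R) : (forall x, `|f x| <= g x) -> summ g -> summ f.
Proof.
move=> fg; apply: le_lt_trans; apply: le_esum => x _; rewrite lee_fin.
by apply: (le_trans (fg x)); exact: ler_norm.
Qed.

Lemma summ0 : summ (fun _ => 0).
Proof. by rewrite /summ esum1// => x _; rewrite normr0. Qed.

Lemma summD (f g : T -> R) : summ f -> summ g -> summ (fun x => f x + g x).
Proof.
move=> sf sg; apply: le_lt_trans (lte_add_pinfty sf sg).
rewrite -esumD//; apply: le_esum => x _; rewrite -EFinD lee_fin; exact: ler_normD.
Qed.

Lemma summZ (c : R) (f : T -> R) : summ f -> summ (fun x => c * f x).
Proof.
move=> sf; rewrite /summ.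
rewrite (eq_esum (b := fun x => (`|c|%:E * (`|f x|)%:E)%E)); last first.
  by move=> x _; rewrite normrM EFinM.
by rewrite esumZ_ge0//; apply: lte_mul_pinfty.
Qed.

Lemma summ_sum (I : Type) (r : seq I) (F : I -> T -> R) :
  (forall i, summ (F i)) -> summ (fun x => \sum_(i <- r) F i x).
Proof.
move=> sF; elim: r => [|i r IH].
  by under [fun x => _]funext do rewrite big_nil; exact: summ0.
by under [fun x => _]funext do rewrite big_cons; exact: summD.
Qed.

Definition Ep (h : T -> R) : R := fine (\esum_(x in [set: T]) (h x)%:E).

Lemma Ep_fin (h : T -> R) (f : T -> R) : (forall x, 0 <= h x) ->
  (forall x, h x <= `|f x|) -> summ f ->
  (\esum_(x in [set: T]) (h x)%:E)%E \is a fin_num.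
Proof.
move=> h0 hf sf; rewrite ge0_fin_numE; last first.
  by apply: esum_ge0 => x _; rewrite lee_fin.
apply: le_lt_trans sf; apply: le_esum => x _; by rewrite lee_fin.
Qed.

Lemma EpD (a b : T -> R) : (forall x, 0 <= a x) -> (forall x, 0 <= b x) ->
  (\esum_(x in [set: T]) (a x)%:E)%E \is a fin_num ->
  (\esum_(x in [set: T]) (b x)%:E)%E \is a fin_num ->
  Ep (fun x => a x + b x) = Ep a + Ep b.
Proof.
move=> a0 b0 fa fb; rewrite /Ep.
under eq_esum do rewrite EFinD.
rewrite esumD//; first by rewrite fineD.
by move=> x _; rewrite lee_fin.
by move=> x _; rewrite lee_fin.
Qed.

Lemma rsumE (f : T -> R) : rsum f =
  Ep (fun x => Num.max (f x) 0) - Ep (fun x => Num.max (- f x) 0).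
Proof. by []. Qed.

Lemma pos_le (f : T -> R) x : Num.max (f x) 0 <= `|f x|.
Proof. by rewrite ge_max normr_ge0 ler_norm. Qed.
Lemma neg_le (f : T -> R) x : Num.max (- f x) 0 <= `|f x|.
Proof. by rewrite ge_max normr_ge0 -normrN ler_norm. Qed.
Lemma max_ge0 (y : R) : 0 <= Num.max y 0.
Proof. by rewrite le_max lexx orbT. Qed.

Lemma rsumD (f g : T -> R) : summ f -> summ g ->
  rsum (fun x => f x + g x) = rsum f + rsum g.
Proof.
move=> sf sg; have sfg := summD sf sg.
set P := fun (h : T -> R) x => Num.max (h x) 0.
set N := fun (h : T -> R) x => Num.max (- h x) 0.
have fin h : summ h -> (\esum_(x in [set: T]) (P h x)%:E)%E \is a fin_num
    /\ (\esum_(x in [set: T]) (N h x)%:E)%E \is a fin_num.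
  move=> sh; split; apply: (Ep_fin (f := h)) => //.
  - by move=> x; exact: max_ge0.
  - by move=> x; exact: pos_le.
  - by move=> x; exact: max_ge0.
  - by move=> x; exact: neg_le.
have [f1 f2] := fin _ sf; have [g1 g2] := fin _ sg.
have [h1 h2] := fin _ sfg.
have key : Ep (fun x => P (fun x => f x + g x) x + (N f x + N g x)) =
           Ep (fun x => N (fun x => f x + g x) x + (P f x + P g x)).
  congr Ep; apply: funext => x; rewrite /P /N.
  have e (y : R) : Num.max y 0 - Num.max (- y) 0 = y.
    by case: (leP y 0) => hy; case: (leP (- y) 0) => hy2; lra.
  have := e (f x + g x); have := e (f x); have := e (g x); lra.
have gep h x : 0 <= P h x by exact: max_ge0.
have gen h x : 0 <= N h x by exact: max_ge0.
have addge (a b : T -> R) : (forall x, 0 <= a x) -> (forall x, 0 <= b x) ->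
    forall x, 0 <= a x + b x by move=> ha hb x; apply: addr_ge0.
have addfin (a b : T -> R) : (forall x, 0 <= a x) -> (forall x, 0 <= b x) ->
  (\esum_(x in [set: T]) (a x)%:E)%E \is a fin_num ->
  (\esum_(x in [set: T]) (b x)%:E)%E \is a fin_num ->
  (\esum_(x in [set: T]) (a x + b x)%:E)%E \is a fin_num.
  move=> ha hb fa fb; under eq_esum do rewrite EFinD.
  by rewrite esumD ?fin_numD ?fa ?fb// => x _; rewrite lee_fin.
set fg := (fun x => f x + g x).
have k1 : Ep (fun x => P fg x + (N f x + N g x)) = Ep (P fg) + (Ep (N f) + Ep (N g)).
  rewrite (@EpD (P fg) (fun x => N f x + N g x)) //; last first.
  - exact: addfin.
  - exact: addge.
  by rewrite (@EpD (N f) (N g)).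
have k2 : Ep (fun x => N fg x + (P f x + P g x)) = Ep (N fg) + (Ep (P f) + Ep (P g)).
  rewrite (@EpD (N fg) (fun x => P f x + P g x)) //; last first.
  - exact: addfin.
  - exact: addge.
  by rewrite (@EpD (P f) (P g)).
rewrite !rsumE -/fg; move: key; rewrite k1 k2 /P /N /=; lra.
Qed.

Lemma fine_mulE (c : R) (e : \bar R) : fine (c%:E * e)%E = c * fine e.
Proof.
case: e => [r||] /=; first by [].
  by rewrite mulr0 mulr_infty; case: sgrP => _; rewrite ?mul1e ?mul0e ?mulN1e.
by rewrite mulr0 mulr_infty; case: sgrP => _; rewrite ?mul1e ?mul0e ?mulN1e.
Qed.

Lemma EpZ (c : R) (h : T -> R) : 0 <= c -> (forall x, 0 <= h x) ->
  Ep (fun x => c * h x) = c * Ep h.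
Proof.
move=> c0 h0; rewrite /Ep -fine_mulE -esumZ_ge0 //; try by move=> x; rewrite lee_fin.
Qed.

Lemma rsumN (f : T -> R) : rsum (fun x => - f x) = - rsum f.
Proof.
rewrite !rsumE.
have -> : (fun x => Num.max (- - f x) 0) = (fun x => Num.max (f x) 0).
  by apply: funext => x; rewrite opprK.
by rewrite opprB.
Qed.

Lemma rsumZp (c : R) (f : T -> R) : 0 <= c ->
  rsum (fun x => c * f x) = c * rsum f.
Proof.
move=> c0; rewrite !rsumE mulrBr -!EpZ//; try by move=> x; exact: max_ge0.
congr (Ep _ - Ep _); apply: funext => x; rewrite maxr_pMr// mulr0 //.
by rewrite mulrN.
Qed.

Lemma rsumZ (c : R) (f : T -> R) : rsum (fun x => c * f x) = c * rsum f.
Proof.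
case: (leP 0 c) => c0; first exact: rsumZp.
have -> : (fun x => c * f x) = (fun x => (- c) * (- f x)).
  by apply: funext => x; rewrite mulrNN.
rewrite rsumZp ?oppr_ge0 ?(ltW c0)// rsumN; by rewrite mulrNN.
Qed.

Lemma rsum0 : rsum (fun _ : T => 0 : R) = 0.
Proof.
rewrite rsumE /Ep !esum1 ?subrr// => x _; by rewrite ?oppr0 maxxx.
Qed.

Lemma rsum_sum (I : Type) (r : seq I) (F : I -> T -> R) :
  (forall i, summ (F i)) ->
  rsum (fun x => \sum_(i <- r) F i x) = \sum_(i <- r) rsum (F i).
Proof.
move=> sF; elim: r => [|i r IH].
  by under [fun x => _]funext do rewrite big_nil; rewrite big_nil rsum0.
under [fun x => _]funext do rewrite big_cons.
by rewrite rsumD ?big_cons ?IH//; exact: summ_sum.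
Qed.

Lemma rsum_ge0 (h : T -> R) : (forall x, 0 <= h x) -> 0 <= rsum h.
Proof.
move=> h0; rewrite rsumE /Ep.
rewrite [X in _ - fine X]esum1 ?subr0; last first.
  by move=> x _; apply/eqP; rewrite eqe; apply/eqP/max_r; rewrite oppr_le0.
by apply: fine_ge0; apply: esum_ge0 => x _; rewrite lee_fin; exact: max_ge0.
Qed.

Lemma rsum_gt0 (h : T -> R) x0 : (forall x, 0 <= h x) -> summ h -> 0 < h x0 ->
  0 < rsum h.
Proof.
move=> h0 sh hx0; rewrite rsumE /Ep.
rewrite [X in _ - fine X]esum1 ?subr0; last first.
  by move=> x _; apply/eqP; rewrite eqe; apply/eqP/max_r; rewrite oppr_le0.
have hf := Ep_fin (f := h) (fun x => max_ge0 (h x)) (pos_le h) sh.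
apply: fine_gt0; apply/andP; split; last first.
  by move: hf; rewrite ge0_fin_numE// esum_ge0// => x _; rewrite lee_fin max_ge0.
apply: (@lt_le_trans _ _ (Num.max (h x0) 0)%:E); first by rewrite lte_fin lt_max hx0.
apply: esum_ge; exists [set x0]%classic; first by split => //; exact: finite_set1.
by rewrite fsbig_set1.
Qed.

End RS.

Section Spec.
Variables (R : realType) (d p : nat) (mu : 'I_p -> 'I_p -> 'rV[int]_d -> R).
Variable g : 'M[R]_(p, d).
Hypothesis mu0 : forall i j x, 0 <= mu i j x.
Hypothesis expm : exp_moments mu.

Definition zemb (z : 'rV[int]_d) : 'rV[R]_d := map_mx (fun n : int => n%:~R) z.

Lemma muR_zemb i j z : muR mu i j (zemb z) = mu i j z.
Proof.
rewrite /muR; have -> : [forall k, zemb z 0 k \is a Num.int] = true.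
  by apply/forallP => k; rewrite mxE intr_int.
congr (mu i j); apply/rowP => m; by rewrite !mxE intrKfloor.
Qed.

Lemma muR_ge0 i j x : 0 <= muR mu i j x.
Proof. by rewrite /muR; case: ifP. Qed.

Lemma zemb_inj : injective zemb.
Proof.
move=> a b e; apply/rowP => m; move/rowP: e => /(_ m); rewrite !mxE.
exact: intr_inj.
Qed.

Lemma muR_out i j x : ~~ (x \in range zemb) -> muR mu i j x = 0.
Proof.
move=> hx; rewrite /muR; case: ifPn => // /forallP hint.
case/negP: hx; rewrite inE; exists (map_mx (@Num.floor R) x) => //.
apply/rowP => m; rewrite !mxE; apply: floorK; exact: hint.
Qed.

Lemma le_znorm (z : 'rV[int]_d) k : `|(z 0 k)%:~R : R| <= znorm R z.
Proof.
rewrite /znorm (bigD1 k) //= ler_wpDr //; exact: sumr_ge0.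
Qed.

Lemma znorm_ge0 (z : 'rV[int]_d) : 0 <= znorm R z.
Proof. exact: sumr_ge0. Qed.

Lemma poly_bound (zk zl ck cl N : R) : `|zk| <= N -> `|zl| <= N ->
  `|(zk - ck) * (zl - cl)| <= ((1 + `|ck|) * (1 + `|cl|)) * expR (2 * N).
Proof.
move=> hk hl; have N0 : 0 <= N by apply: le_trans hk.
have a1 : `|zk - ck| <= (1 + `|ck|) * (1 + N).
  apply: le_trans (ler_normB _ _) _; have := normr_ge0 ck; nra.
have a2 : `|zl - cl| <= (1 + `|cl|) * (1 + N).
  apply: le_trans (ler_normB _ _) _; have := normr_ge0 cl; nra.
have e1 : 1 + N <= expR N by exact: expR_ge1Dx.
rewrite normrM; apply: le_trans (ler_pM _ _ a1 a2) _ => //.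
have -> : 2 * N = N + N by rewrite mulrDl mul1r.
rewrite expRD.
have c1 : 0 <= 1 + `|ck| by have := normr_ge0 ck; lra.
have c2 : 0 <= 1 + `|cl| by have := normr_ge0 cl; lra.
have -> : (1 + `|ck|) * (1 + N) * ((1 + `|cl|) * (1 + N)) =
   ((1 + `|ck|) * (1 + `|cl|)) * ((1 + N) * (1 + N)) by ring.
apply: ler_wpM2l; first exact: mulr_ge0.
apply: ler_pM => //; lra.
Qed.

Lemma summ_gmu i j k l :
  summ (fun x : 'rV[R]_d => x 0 k * x 0 l * gmu mu g i j x).
Proof.
set c := row j g - row i g.
rewrite /summ (reindex_esum setT setT (fun y => y - c)); last first.
  rewrite setTT_bijective; exists (fun y => y + c) => y; by rewrite ?subrK ?addrK.
have ey y : y - c + row j g - row i g = y.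
  by apply/rowP => m; rewrite /c !mxE; ring.
under eq_esum do rewrite /gmu ey.
rewrite (eq_esum (b := fun y => if y \in range zemb then
   (`|(y - c) 0 k * (y - c) 0 l * muR mu i j y|)%:E else 0%E)); last first.
  by move=> y _; case: ifPn => // /(muR_out i j) ->; rewrite mulr0 normr0.
rewrite -esum_mkcond esum_image; last by move=> a b _ _; exact: zemb_inj.
set K := (1 + `|c 0 k|) * (1 + `|c 0 l|).
apply: (@le_lt_trans _ _ (\esum_(z in [set: 'rV[int]_d])
    (K%:E * (expR (2 * znorm R z) * mu i j z)%:E))%E).
  apply: le_esum => z _; rewrite muR_zemb -EFinM lee_fin.
  rewrite normrM (ger0_norm (mu0 _ _ _)) mulrA; apply: ler_wpM2r => //.
  have := @poly_bound ((z 0 k)%:~R) ((z 0 l)%:~R) (c 0 k) (c 0 l) _ (le_znorm z k) (le_znorm z l).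
  by rewrite /K /c !mxE.
rewrite esumZ_ge0; last by move=> z; rewrite lee_fin mulr_ge0 ?expR_ge0.
  apply: lte_mul_pinfty => //; first by rewrite lee_fin /K mulr_ge0 // addr_ge0.
  exact: expm.
by rewrite /K mulr_ge0 // addr_ge0.
Qed.

End Spec.

Lemma sum_ge_term (R : realType) (I : finType) (F : I -> R) a :
  (forall b, 0 <= F b) -> F a <= \sum_b F b.
Proof. by move=> F0; rewrite (bigD1 a) //= ler_wpDr // sumr_ge0. Qed.

Definition dot (R : realType) (d : nat) (v x : 'rV[R]_d) : R :=
  \sum_k v 0 k * x 0 k.

Lemma dotD (R : realType) (d : nat) (v a b : 'rV[R]_d) :
  dot v (a + b) = dot v a + dot v b.
Proof. by rewrite /dot -big_split; apply: eq_bigr => k _; rewrite !mxE mulrDr. Qed.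

Lemma dotN (R : realType) (d : nat) (v a : 'rV[R]_d) :
  dot v (- a) = - dot v a.
Proof. by rewrite /dot -sumrN; apply: eq_bigr => k _; rewrite !mxE mulrN. Qed.

Lemma zembB (R : realType) (d : nat) (a b : 'rV[int]_d) :
  zemb R (a - b) = zemb R a - zemb R b.
Proof. by apply/rowP => m; rewrite !mxE rmorphB. Qed.

Section Spec2.
Variables (R : realType) (d p : nat) (mu : 'I_p -> 'I_p -> 'rV[int]_d -> R).
Variables (g : 'M[R]_(p, d)) (pi : 'I_p -> R).
Hypothesis mu0 : forall i j x, 0 <= mu i j x.
Hypothesis expm : exp_moments mu.
Hypothesis st : stationary mu pi.

Lemma summ_mu i j : summ (mu i j).
Proof.
apply: (@summ_le _ _ _ (fun z => expR (1 * znorm R z) * mu i j z)).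
  move=> z; rewrite ger0_norm // -{1}(mul1r (mu i j z)) ler_wpM2r //.
  by rewrite mul1r; apply: le_trans (expR_ge1Dx _); rewrite lerDl znorm_ge0.
rewrite /summ; under eq_esum do rewrite ger0_norm ?mulr_ge0 ?expR_ge0 //.
exact: expm.
Qed.

Lemma mod_trans_ge0 i j : 0 <= mod_trans mu i j.
Proof. exact: rsum_ge0. Qed.

Lemma pi_closure i j y : 0 < pi i -> 0 < mu i j y -> 0 < pi j.
Proof.
move=> pii muy; case: st => pi0 _ pst; rewrite pst (bigD1 i) //=.
have A : 0 < pi i * mod_trans mu i j.
  by rewrite mulr_gt0 // (rsum_gt0 (x0 := y)) //; exact: summ_mu.
have B : 0 <= \sum_(k | k != i) pi k * mod_trans mu k j.
  by apply: sumr_ge0 => k _; rewrite mulr_ge0 // mod_trans_ge0.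
lra.
Qed.

Variable v : 'rV[R]_d.
Hypothesis hyp : forall i j y, 0 < pi i -> 0 < mu i j y ->
  dot v (zemb R y - row j g + row i g) = 0.

Definition phi (s : 'rV[int]_d * 'I_p) := dot v (zemb R s.1) - dot v (row s.2 g).

Lemma phi_step u t : 0 < pi u.2 -> mstep mu u t != 0 -> 0 < pi t.2 /\ phi t = phi u.
Proof.
move=> pu hm; have mpos : 0 < mu u.2 t.2 (t.1 - u.1) by rewrite lt_def hm mu0.
split; first exact: pi_closure mpos.
have := hyp pu mpos; rewrite !dotD dotN zembB dotD dotN /phi; lra.
Qed.

Lemma phi_invariant n s t : 0 < pi s.2 -> nstep mu n s t != 0%E ->
  0 < pi t.2 /\ phi t = phi s.
Proof.
move=> ps; elim: n t => [|n IH] t /=.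
  case: (eqVneq s t) => [<- _ //|_]; by rewrite /= mulr0n eqxx.
move=> hne; apply: contrapT => hP; move: hne; rewrite esum1 ?eqxx // => u _.
case: (eqVneq (nstep mu n s u) 0%E) => [->|hu]; first by rewrite mul0e.
have [pu fu] := IH u hu.
case: (eqVneq (mstep mu u t) 0) => [->|hm]; first by rewrite mule0.
have [pt ft] := phi_step pu hm.
by exfalso; apply: hP; split => //; rewrite ft fu.
Qed.

End Spec2.

Unset Implicit Arguments.
Set Strict Implicit.

Theorem proposition2p8 (R : realType) (d p : nat)
  (mu : 'I_p -> 'I_p -> 'rV[int]_d -> R) (pi : 'I_p -> R) (g : 'M[R]_(p, d)) :
  (0 < d)%N -> (0 < p)%N ->
  jump_matrix mu -> irreducible mu -> aperiodic mu -> exp_moments mu ->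
  stationary mu pi -> appropriate mu pi g ->
  (energy mu pi g)^T = energy mu pi g /\
  (forall v : 'rV[R]_d, v != 0 -> 0 < (v *m energy mu pi g *m v^T) 0 0).
Proof.
move=> d0 p0 [mu0 _] irr _ expm st _.
split.
  apply/matrixP => k l; rewrite !mxE; congr (rsum _); apply: funext => x.
  by rewrite (mulrC (x 0 l)).
move=> v v0.
have pi0 : forall i, 0 <= pi i by case: st => h _ _; exact: h.
pose W := fun x : 'rV[R]_d => \sum_i \sum_j pi i * gmu mu g i j x.
have W0 : forall x, 0 <= W x.
  move=> x; apply: sumr_ge0 => i _; apply: sumr_ge0 => j _.
  apply: mulr_ge0; [exact: pi0 | exact: muR_ge0].
have sF : forall k l, summ (fun x : 'rV[R]_d => x 0 k * x 0 l * W x).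
  move=> k l; have -> : (fun x : 'rV[R]_d => x 0 k * x 0 l * W x) =
     (fun x : 'rV[R]_d => \sum_i \sum_j pi i * (x 0 k * x 0 l * gmu mu g i j x)).
    apply: funext => x. rewrite /W mulr_sumr. apply: eq_bigr => i _.
    rewrite mulr_sumr; apply: eq_bigr => j _. ring.
  apply: summ_sum => i; apply: summ_sum => j; apply: summZ.
  exact: summ_gmu.
have eQ : (v *m energy mu pi g *m v^T) 0 0 =
    rsum (fun x : 'rV[R]_d => \sum_k \sum_l v 0 k * v 0 l * (x 0 k * x 0 l * W x)).
  have -> : (v *m energy mu pi g *m v^T) 0 0 =
      \sum_l \sum_k v 0 k * energy mu pi g k l * v 0 l.
    by rewrite mxE; apply: eq_bigr => l _; rewrite !mxE big_distrl.
  rewrite rsum_sum; last by move=> k; apply: summ_sum => l; apply: summZ.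
 
  rewrite [RHS](eq_bigr (fun k => \sum_l v 0 k * v 0 l *
      rsum (fun x : 'rV[R]_d => x 0 k * x 0 l * W x))); last first.
    move=> k _; rewrite rsum_sum; last by move=> l; exact: summZ.
    by apply: eq_bigr => l _; rewrite rsumZ.
  rewrite exchange_big /=; apply: eq_bigr => k _; apply: eq_bigr => l _.
 
  rewrite !mxE.
  by rewrite mulrAC.
have fe : (fun x : 'rV[R]_d => \sum_k \sum_l v 0 k * v 0 l * (x 0 k * x 0 l * W x))
    = (fun x : 'rV[R]_d => dot v x ^+ 2 * W x).
  apply: funext => x; rewrite /dot expr2 big_distrlr /= mulr_suml.
  apply: eq_bigr => k _; rewrite mulr_suml; apply: eq_bigr => l _; ring.
have sH : summ (fun x : 'rV[R]_d => \sum_k \sum_l v 0 k * v 0 l * (x 0 k * x 0 l * W x)).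
  by apply: summ_sum => k; apply: summ_sum => l; apply: summZ.
rewrite fe in sH; rewrite eQ fe.
have [x0 hx0] : exists x0 : 'rV[R]_d, 0 < dot v x0 ^+ 2 * W x0.
  apply: contrapT => hno.
  have hyp : forall i j y, 0 < pi i -> 0 < mu i j y ->
      dot v (zemb R y - row j g + row i g) = 0.
    move=> i j y pii muy; set x := zemb R y - row j g + row i g.
    have gx : gmu mu g i j x = mu i j y.
      rewrite /gmu (_ : x + row j g - row i g = zemb R y) ?muR_zemb //.
      by apply/rowP => m; rewrite /x !mxE; ring.
    have Wx : 0 < W x.
      apply: (@lt_le_trans _ _ (pi i * gmu mu g i j x)); first by rewrite gx mulr_gt0.
      apply: le_trans (sum_ge_term (F := fun i' => \sum_j pi i' * gmu mu g i' j x) i _).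
        apply: (sum_ge_term (F := fun j' => pi i * gmu mu g i j' x) j).
        by move=> j'; rewrite mulr_ge0 // /gmu muR_ge0.
      move=> i'; apply: sumr_ge0 => j' _; by rewrite mulr_ge0 // /gmu muR_ge0.
    case: (eqVneq (dot v x) 0) => // hd; exfalso; apply: hno; exists x.
    by rewrite mulr_gt0 // lt_def sqr_ge0 sqrf_eq0 hd.
  have [i0 pi0pos] : exists i, 0 < pi i.
    apply: contrapT => hn; case: st => _ s1 _; move: s1.
    rewrite big1 => [/esym/eqP|i _]; first by rewrite oner_eq0.
    apply/eqP; rewrite eq_le pi0 andbT leNgt; apply/negP => h; apply: hn; by exists i.
  have [k vk] : exists k, v 0 k != 0.
    apply: contrapT => hn; move/eqP: v0; apply; apply/rowP => k; rewrite mxE.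
    by case: (eqVneq (v 0 k) 0) => // h; exfalso; apply: hn; exists k.
  pose e : 'rV[int]_d := delta_mx 0 k.
  have [n hn] := irr (0, i0) (e, i0).
  have hne : nstep mu n (0, i0) (e, i0) != 0%E by rewrite gt_eqF.
  have [_ ph] := @phi_invariant R d p mu g pi mu0 expm st v hyp n (0, i0) (e, i0) pi0pos hne.
  move: ph; rewrite /phi /=.
  have -> : zemb R (0 : 'rV[int]_d) = 0 by apply/rowP => m; rewrite !mxE.
  have -> : dot v 0 = 0 by rewrite /dot big1 // => m _; rewrite mxE mulr0.
  have -> : dot v (zemb R e) = v 0 k.
    rewrite /dot (bigD1 k) //= big1 ?addr0 => [|m hm]; first by rewrite !mxE !eqxx /= (_ : 1%:~R = 1 :> R) ?mulr1.
    by rewrite !mxE (negbTE hm) andbF mulr0.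
  by move=> h; move: vk; rewrite (_ : v 0 k = 0) ?eqxx //; lra.
apply: (rsum_gt0 (x0 := x0)) => //.
by move=> x; rewrite mulr_ge0 // sqr_ge0.
Qed.
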